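(* Let $(X_1,X_2,A)\in\mathbb R\times\mathbb R\times\mathbb R\subset\mathbb C^2\times\mathbb R$ (i.e. $X_1,X_2$ real) satisfy $$-2\,\mathrm{Re}(X_1+X_2)-2\,\mathrm{Re}\bigl(X_1\overline{X}_2e^{-2iA}\bigr)+|X_1|^2+|X_2|^2+1=0$$ and $-\pi/2\le A\le\pi/2$. Then $\mathrm{Re}(X_1e^{-iA})\ge0$. *)

(* Defs.v *)
From Stdlib Require Import Reals.
From Coquelicot Require Import Coquelicot.
Open Scope R_scope.

Definition expi (t : R) : C := (cos t, sin t).

(* Main.v *)
Require Import Defs.
From Stdlib Require Import Reals Lra Psatz.
From Coquelicot Require Import Coquelicot.
Open Scope R_scope.

Theorem theorem3p4 (X1 X2 A : R) :
  -2 * Re (RtoC X1 + RtoC X2)%C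
    - 2 * Re (RtoC X1 * Cconj (RtoC X2) * expi (-2 * A))%C
    + (Cmod (RtoC X1))^2 + (Cmod (RtoC X2))^2 + 1 = 0 ->
  - (PI / 2) <= A <= PI / 2 ->
  0 <= Re (RtoC X1 * expi (- A))%C.
Proof.
  intros H [HA1 HA2].
  rewrite !Cmod_R, !pow2_abs in H.
  unfold expi, Re, RtoC, Cconj, Cmult, Cplus in *; simpl in *.
  rewrite cos_neg in *.
  replace (-2 * A) with (- (2 * A)) in H by ring.
  rewrite cos_neg, sin_neg, cos_2a_cos, sin_2a in H.
  assert (Hk : 0 <= cos A) by (apply cos_ge_0; lra).
  set (k := cos A) in *.
  replace (X1 * k - 0 * - sin A) with (X1 * k) by ring.
  destruct (Req_dec k 0) as [Hk0|Hk0]; [rewrite Hk0; lra|].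
  assert (Hkp : 0 < k) by lra.
  destruct (Rle_or_lt 0 X1) as [HX|HX]; [nra|].
  exfalso.
  set (c := 2 * k * k - 1) in *.
  assert (Hc1 : c + 1 > 0) by (unfold c; nra).
  assert (Hk1 : k <= 1) by (unfold k; apply COS_bound).
  assert (Hc2 : c - 1 <= 0) by (unfold c; nra).
  assert (E : (X2 - (1 + X1 * c))^2 = (2 + X1 * (c - 1)) * (X1 * (c + 1))).
  { revert H. unfold c. simpl. intro H. nra. }
  assert (P1 : 2 + X1 * (c - 1) > 0) by nra.
  assert (P2 : X1 * (c + 1) < 0) by nra.
  pose proof (pow2_ge_0 (X2 - (1 + X1 * c))).
  nra.
Qed.
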